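(* Let $\mathbf{f}$ be the Fibonacci word, $\phi=\frac{1+\sqrt5}{2}$, and fix a positive integer $n$. Let $\ell$ be a positive integer such that $$\phi^{-n+1}\le \min\big(\{2\ell F_n\phi\},\,1-\{2\ell F_n\phi\}\big).$$ Then for every index $x\ge 0$, $$\mathbf{f}_{[x,\,x+2F_n]}\neq \mathbf{f}_{[x+2\ell F_n,\,x+2\ell F_n+2F_n]}.$$
   Context: The Fibonacci word is $\mathbf{f}=\sigma^{\omega}(0)=0100101001001\cdots$, the fixed point of the morphism $\sigma(0)=01$, $\sigma(1)=0$. Words are $0$-indexed and $v_{[i,j]}$ denotes the substring of $v$ with letters at indices $i,\dots,j-1$. $F_1=F_2=1$, $F_n=F_{n-1}+F_{n-2}$. $\{y\}$ denotes the fractional part of a real number $y$. *)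

(* Defs.v *)
From Stdlib Require Import Reals Lra Lia ZArith Arith List.
Open Scope R_scope.

Fixpoint F (n : nat) : nat :=
  match n with
  | O => O
  | S O => 1%nat
  | S ((S m) as p) => (F p + F m)%nat
  end.

Definition sigma_letter (a : nat) : list nat :=
  match a with
  | O => 0%nat :: 1%nat :: nil
  | _ => 0%nat :: nil
  end.

Definition sigma (w : list nat) : list nat := flat_map sigma_letter w.

Fixpoint sigma_iter (k : nat) : list nat :=
  match k with
  | O => 0%nat :: nil
  | S k' => sigma (sigma_iter k')
  end.

(* The Fibonacci word f = sigma^omega(0), 0-indexed.  Since sigma^k(0) is a
   prefix of sigma^(k+1)(0) and has length F (k+2) >= k+1, the letter at
   index i is the i-th letter of sigma^(i+1)(0). *)
Definition fib_word (i : nat) : nat := nth i (sigma_iter (S i)) 0%nat.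

(* v_[i,j] : the factor with letters at indices i, ..., j-1. *)
Definition factor (v : nat -> nat) (i j : nat) : list nat :=
  map v (seq i (j - i)).

Definition phi : R := (1 + sqrt 5) / 2.

Definition frac (y : R) : R := y - IZR (Int_part y).

(* Main.v *)
Require Import Defs.
From Stdlib Require Import Reals Lra Lia ZArith Arith List.
Open Scope R_scope.

Definition rr : R := phi - 1.
Definition al : R := 1 - rr.

Lemma sqrt5_facts : 2 < sqrt 5 < 3 /\ sqrt 5 * sqrt 5 = 5.
Proof.
  assert (H := sqrt_sqrt 5 ltac:(lra)). assert (H0 := sqrt_pos 5).
  split; [split; nra | exact H].
Qed.

Lemma rr_facts : 0 < rr < 1 /\ rr * rr = 1 - rr /\ rr * phi = 1.
Proof.
  destruct sqrt5_facts as [[h1 h2] h3]. unfold rr, phi.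
  split; [split; lra|split; nra].
Qed.

Lemma al_facts : 0 < al < 1/2 /\ al * al = 3 * al - 1 /\ al = 2 - phi.
Proof.
  destruct rr_facts as [[h1 h2] [h3 h4]]. destruct sqrt5_facts as [[g1 g2] g3].
  unfold al. unfold rr, phi in *. split; [split; lra | split; nra].
Qed.

Lemma descent : forall u, (0 < u)%nat -> forall m, (m*m + u*u <> 3*m*u)%nat.
Proof.
  intro u. induction u as [u IH] using lt_wf_ind. intros Hu m Heq.
  destruct (Nat.Even_or_Odd m) as [[p Hp]|[p Hp]];
  destruct (Nat.Even_or_Odd u) as [[q Hq]|[q Hq]]; subst.
  - assert (E : (p*p + q*q = 3*p*q)%nat) by lia.
    apply (IH q ltac:(lia) ltac:(lia) p E).
  - lia.
  - lia.
  - lia.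
Qed.

Lemma al_irr : forall u m : nat, (1 <= u)%nat -> INR u * al <> INR m.
Proof.
  intros u m Hu H. destruct al_facts as [_ [h _]].
  assert (E : INR (m*m + u*u) = INR (3*m*u)).
  { rewrite plus_INR, !mult_INR. rewrite <- H. simpl. nra. }
  apply INR_eq in E. exact (descent u ltac:(lia) m E).
Qed.

Definition fl (u : nat) : nat := Z.to_nat (Int_part (INR u * al)).

Lemma fl_spec u : INR (fl u) <= INR u * al < INR (fl u) + 1.
Proof.
  destruct al_facts as [[h1 h2] _].
  destruct (base_Int_part (INR u * al)) as [b1 b2].
  assert (0 <= INR u) by apply pos_INR.
  assert (Hz : (0 <= Int_part (INR u * al))%Z).
  { assert (IZR (-1) < IZR (Int_part (INR u * al))) by (simpl; nra).
    apply lt_IZR in H0. lia. }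
  unfold fl. rewrite INR_IZR_INZ, Z2Nat.id by exact Hz. lra.
Qed.

Lemma fl_unique u m : INR m <= INR u * al < INR m + 1 -> fl u = m.
Proof.
  intros [h1 h2]. destruct (fl_spec u) as [g1 g2].
  assert (a : (fl u < m + 1)%nat) by (apply INR_lt; rewrite plus_INR; simpl; lra).
  assert (b : (m < fl u + 1)%nat) by (apply INR_lt; rewrite plus_INR; simpl; lra).
  lia.
Qed.

Lemma fl_step u : fl (S u) = fl u \/ fl (S u) = S (fl u).
Proof.
  destruct al_facts as [[h1 h2] _].
  destruct (fl_spec u) as [a1 a2]. destruct (fl_spec (S u)) as [b1 b2].
  rewrite S_INR in b1, b2.
  assert (c1 : (fl u < fl (S u) + 1)%nat) by (apply INR_lt; rewrite plus_INR; simpl; nra).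
  assert (c2 : (fl (S u) < fl u + 2)%nat) by (apply INR_lt; rewrite plus_INR; simpl; nra).
  lia.
Qed.

Lemma fl_lt u : (1 <= u)%nat -> (fl (S u) < u)%nat.
Proof.
  intro Hu. destruct al_facts as [[h1 h2] _]. destruct (fl_spec (S u)) as [a1 a2].
  rewrite S_INR in a1. apply le_INR in Hu. simpl in Hu. apply INR_lt. nra.
Qed.

Lemma fl_le u : (fl (S u) <= u)%nat.
Proof.
  destruct u. 2: (pose proof (fl_lt (S u)); lia).
  assert (fl 1 = 0%nat) as ->; [|lia].
  apply fl_unique. simpl. destruct al_facts as [[h1 h2] _]. lra.
Qed.

Definition s (i : nat) : nat := (fl (S (S i)) - fl (S i))%nat.

Lemma s_fl i : fl (S (S i)) = (fl (S i) + s i)%nat /\ (s i <= 1)%nat.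
Proof. unfold s. destruct (fl_step (S i)); lia. Qed.

Lemma key L : s (2*L - fl (S L)) = 0%nat /\
   (s L = 0%nat -> s (S (2*L - fl (S L))) = 1%nat).
Proof.
  destruct al_facts as [[h1 h2] [h3 _]].
  pose proof (fl_le L) as Hle.
  set (a := fl (S L)) in *.
  set (m := (L - a)%nat).
  assert (E : (2*L - a = L + m)%nat) by lia.
  rewrite E.
  destruct (fl_spec (S L)) as [t1 t2]. fold a in t1, t2.
  assert (tne : INR (S L) * al <> INR a) by (apply al_irr; lia).
  set (x := INR L) in *. set (A := INR a) in *.
  rewrite S_INR in t1, t2, tne. fold x in t1, t2, tne.
  set (t := (x+1)*al - A).
  assert (tpos : 0 < t) by (unfold t; lra).
  assert (tlt : t < 1) by (unfold t; lra).
  assert (HM : INR m = x - A) by (unfold m; rewrite minus_INR by lia; reflexivity).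
  set (T := t * (1 - al)).
  assert (T1 : 0 < T) by (unfold T; nra).
  assert (T2 : T < 1 - al) by (unfold T; nra).
  assert (Id : (x + INR m + 2) * al = INR m + 1 - T).
  { rewrite HM. unfold T, t.
    assert (K : (x + (x - A) + 2) * al - ((x - A) + 1 - ((x + 1) * al - A) * (1 - al))
                = - (x+1) * (al*al - 3*al + 1)) by (clear; ring).
    rewrite h3 in K. lra. }
  assert (f1 : fl (S (L + m)) = m).
  { apply fl_unique. rewrite S_INR, plus_INR. fold x. lra. }
  assert (f2 : fl (S (S (L + m))) = m).
  { apply fl_unique. rewrite !S_INR, plus_INR. fold x. lra. }
  split.
  - unfold s. rewrite f1, f2. lia.
  - intro Hs. unfold s in Hs |- *.
    destruct (fl_step (S L)) as [e|e]; [|fold a in e; lia]. fold a in e.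
    destruct (fl_spec (S (S L))) as [u1 u2]. rewrite e in u1, u2.
    rewrite !S_INR in u1, u2. fold x A in u1, u2.
    assert (T3 : T <= al).
    { assert (t < 1 - al) by (unfold t; lra). unfold T. nra. }
    assert (f3 : fl (S (S (S (L + m)))) = S m).
    { apply fl_unique. rewrite !S_INR, plus_INR. fold x. lra. }
    rewrite f3, f2. lia.
Qed.

Definition pref (L : nat) : list nat := map s (seq 0 L).
Definition PP (L : nat) : nat := (2*L - fl (S L))%nat.

Lemma sigma_pre L : Defs.sigma (pref L) = pref (PP L).
Proof.
  induction L as [|L IH].
  - unfold PP. pose proof (fl_le 0). replace (2*0 - fl 1)%nat with 0%nat by lia. reflexivity.
  - unfold pref in *. rewrite seq_S, map_app. unfold Defs.sigma in *. rewrite flat_map_app, IH.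
    simpl. rewrite app_nil_r.
    destruct (s_fl L) as [E Hs]. pose proof (fl_le L). pose proof (fl_le (S L)).
    destruct (key L) as [k1 k2].
    unfold PP. rewrite E.
    assert (Q : (2 * S L - (fl (S L) + s L) = 2*L - fl (S L) + (2 - s L))%nat) by lia.
    rewrite Q. remember (2*L - fl (S L))%nat as P.
    destruct (s L) as [|[|z]] eqn:HsL; [|simpl|lia].
    + replace (P + (2 - 0))%nat with (S (S P)) by lia.
      rewrite !seq_S, !map_app. rewrite <- app_assoc. simpl.
      replace (0 + S P)%nat with (S P) by lia.
      rewrite k1, (k2 eq_refl). reflexivity.
    + replace (P + 1)%nat with (S P) by lia.
      rewrite !seq_S, !map_app. simpl. rewrite k1. reflexivity.
Qed.

Lemma nth_map_seq (f : nat -> nat) m : forall x j, (j < m)%nat -> nth j (map f (seq x m)) 0%nat = f (x + j)%nat.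
Proof.
  induction m as [|m IH]; intros x j Hj; [lia|].
  destruct j as [|j]; simpl. f_equal; lia.
  rewrite IH by lia. f_equal; lia.
Qed.

Lemma sigma_iter_pre k : exists L, sigma_iter k = pref L /\ (k < L)%nat.
Proof.
  induction k as [|k [L [E H]]].
  - exists 1%nat. split; [|lia]. unfold pref. simpl. unfold s.
    destruct al_facts as [[h1 h2] _].
    assert (fl 1 = 0%nat) as ->. { apply fl_unique. simpl. lra. }
    assert (fl 2 = 0%nat) as ->. { apply fl_unique. simpl. lra. }
    reflexivity.
  - exists (PP L). simpl. rewrite E, sigma_pre. split; [reflexivity|].
    unfold PP. pose proof (fl_lt L ltac:(lia)). lia.
Qed.

Lemma fib_s i : fib_word i = s i.
Proof.
  unfold fib_word. destruct (sigma_iter_pre (S i)) as [L [E H]]. rewrite E.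
  unfold pref. rewrite nth_map_seq by lia. reflexivity.
Qed.

Lemma F_SS m : F (S (S m)) = (F (S m) + F m)%nat.
Proof. reflexivity. Qed.

Lemma F_cong kk : exists z : Z, INR (F kk) * al = IZR z + (- rr) ^ kk.
Proof.
  destruct rr_facts as [_ [h _]].
  assert (forall k, (exists z : Z, INR (F k) * al = IZR z + (- rr) ^ k) /\
                    (exists z : Z, INR (F (S k)) * al = IZR z + (- rr) ^ (S k))).
  { induction k as [|k [[z1 E1] [z2 E2]]].
    - split; [exists (-1)%Z; simpl; ring | exists 1%Z; simpl; unfold al; ring].
    - split; [exists z2; exact E2|].
      exists (z1 + z2)%Z. rewrite F_SS, plus_INR, plus_IZR.
      replace ((- rr) ^ S (S k)) with ((- rr)^k * (rr * rr)) by (simpl; ring).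
      rewrite h. replace ((- rr) ^ S k) with ((- rr)^k * (- rr)) in E2 by (simpl; ring).
      nra. }
  apply H.
Qed.

Lemma pm_pow k : (- rr) ^ k = rr ^ k \/ (- rr) ^ k = - rr ^ k.
Proof.
  induction k as [|k [E|E]]; simpl; [left; ring| right; rewrite E; ring | left; rewrite E; ring].
Qed.

Lemma cover n' : forall th a : R, exists j, (j < F (S (S n')))%nat /\
   exists k : Z, a <= th + INR j * al + IZR k < a + rr ^ n'.
Proof.
  destruct rr_facts as [[r1 r2] [h _]].
  induction n' as [|n' IH]; intros th a.
  - exists 0%nat. split; [simpl; lia|]. exists (- Int_part (th - a))%Z.
    destruct (base_Int_part (th - a)) as [b1 b2]. rewrite opp_IZR. simpl. lra.
  - assert (P1 : 0 < rr ^ (S n')) by (apply pow_lt; lra).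
    assert (P2 : rr ^ (S (S n')) = rr * rr ^ (S n')) by reflexivity.
    assert (P0 : rr ^ n' = rr ^ (S n') + rr ^ (S (S n'))).
    { simpl. replace (rr * (rr * rr ^ n')) with ((rr * rr) * rr ^ n') by ring. rewrite h. ring. }
    assert (P21 : rr ^ (S (S n')) < rr ^ (S n')) by nra.
    assert (P2p : 0 < rr ^ (S (S n'))) by nra.
    destruct (F_cong (S n')) as [z1 E1]. destruct (F_cong (S (S n'))) as [z2 E2].
    assert (Fb : F (S (S (S n'))) = (F (S (S n')) + F (S n'))%nat) by reflexivity.
    rewrite Fb.
    assert (Hsg : ((- rr) ^ S n' = - rr ^ S n' /\ (- rr) ^ S (S n') = rr ^ S (S n')) \/
                  ((- rr) ^ S n' = rr ^ S n' /\ (- rr) ^ S (S n') = - rr ^ S (S n'))).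
    { destruct (pm_pow (S n')) as [e|e]; [right|left]; split; auto;
        replace ((- rr) ^ S (S n')) with (- rr * (- rr) ^ S n') by reflexivity;
        rewrite e; simpl; ring. }
    destruct Hsg as [[e1 e2]|[e1 e2]]; rewrite e1 in E1; rewrite e2 in E2.
    + destruct (IH th (a - rr ^ S (S n'))) as [j [Hj [k Hk]]].
      destruct (Rlt_le_dec (th + INR j * al + IZR k) a) as [Hlt|Hge].
      * destruct (Nat.lt_ge_cases j (F (S n'))) as [Hj1|Hj1].
        -- exists (j + F (S (S n')))%nat. split; [lia|]. exists (k - z2)%Z.
           rewrite plus_INR, minus_IZR. lra.
        -- exists (j - F (S n'))%nat. split; [lia|]. exists (k + z1)%Z.
           rewrite minus_INR by lia. rewrite plus_IZR. lra.
      * exists j. split; [lia|]. exists k. lra.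
    + destruct (IH th a) as [j [Hj [k Hk]]].
      destruct (Rlt_le_dec (th + INR j * al + IZR k) (a + rr ^ S n')) as [Hlt|Hge].
      * exists j. split; [lia|]. exists k. lra.
      * destruct (Nat.lt_ge_cases j (F (S n'))) as [Hj1|Hj1].
        -- exists (j + F (S (S n')))%nat. split; [lia|]. exists (k - z2)%Z.
           rewrite plus_INR, minus_IZR. lra.
        -- exists (j - F (S n'))%nat. split; [lia|]. exists (k + z1)%Z.
           rewrite minus_INR by lia. rewrite plus_IZR. lra.
Qed.

Lemma F_le_S k : (F k <= F (S k))%nat.
Proof. destruct k; [simpl; lia|]. rewrite F_SS. lia. Qed.

Lemma contra (c k : Z) (w d : R) : IZR c <= w -> w + d < IZR c + 1 ->
  1 - d <= w + IZR k -> w + IZR k < 1 -> False.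
Proof.
  intros h1 h2 h3 h4.
  assert (a : IZR (c + k) < IZR 1) by (rewrite plus_IZR; simpl; lra).
  assert (b : IZR 0 < IZR (c + k)) by (rewrite plus_IZR; simpl; lra).
  apply lt_IZR in a. apply lt_IZR in b. lia.
Qed.

Definition th (z : nat) : R := INR (S z) * al - INR (fl (S z)).

Lemma win z j : IZR (Z.of_nat (fl (S (z + j))) - Z.of_nat (fl (S z))) <= th z + INR j * al
   < IZR (Z.of_nat (fl (S (z + j))) - Z.of_nat (fl (S z))) + 1.
Proof.
  destruct (fl_spec (S (z + j))) as [a b]. unfold th.
  rewrite minus_IZR, <- !INR_IZR_INZ.
  replace (INR (S (z + j))) with (INR (S z) + INR j) in a, b
    by (rewrite !S_INR, plus_INR; ring).
  lra.
Qed.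

Lemma th_bounds z : 0 <= th z < 1.
Proof. destruct (fl_spec (S z)). unfold th. lra. Qed.

Lemma pow_conv n' : powerRZ phi (1 - Z.of_nat (S n'))%Z = rr ^ n'.
Proof.
  destruct rr_facts as [[r1 r2] [_ h]].
  replace (1 - Z.of_nat (S n'))%Z with (- Z.of_nat n')%Z by lia.
  rewrite powerRZ_neg', <- pow_powerRZ, <- pow_inv.
  f_equal. assert (phi <> 0) by nra. field_simplify_eq; [|auto]. lra.
Qed.

Theorem proposition16 (n l : nat) (hn : (1 <= n)%nat) (hl : (1 <= l)%nat) :
  powerRZ phi (1 - Z.of_nat n)%Z <=
    Rmin (frac (INR (2 * l * F n) * phi)) (1 - frac (INR (2 * l * F n) * phi)) ->
  forall x : nat,
    factor fib_word x (x + 2 * F n) <>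
    factor fib_word (x + 2 * l * F n) (x + 2 * l * F n + 2 * F n).
Proof.
  intros Hp x Heq.
  destruct n as [|n']; [lia|]. rewrite pow_conv in Hp.
  set (d := (2 * l * F (S n'))%nat) in *.
  set (m := (2 * F (S n'))%nat) in *.
  set (y := (x + d)%nat) in *.
  unfold factor in Heq.
  replace (x + m - x)%nat with m in Heq by lia.
  replace (y + m - y)%nat with m in Heq by lia.
  assert (Hs : forall j, (j < m)%nat -> s (x + j) = s (y + j)).
  { intros j Hj. rewrite <- !fib_s, <- !(nth_map_seq fib_word m) by exact Hj.
    rewrite Heq. reflexivity. }
  assert (Hfl : forall j, (j <= m)%nat ->
      (fl (S (x + j)) + fl (S y) = fl (S (y + j)) + fl (S x))%nat).
  { induction j as [|j IH]; intro Hj.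
    - rewrite !Nat.add_0_r. lia.
    - rewrite !Nat.add_succ_r. destruct (s_fl (x + j)) as [e1 _].
      destruct (s_fl (y + j)) as [e2 _]. rewrite e1, e2, (Hs j) by lia.
      specialize (IH ltac:(lia)). lia. }
  assert (Hc : forall j, (j <= m)%nat ->
     (Z.of_nat (fl (S (x + j))) - Z.of_nat (fl (S x)) =
      Z.of_nat (fl (S (y + j))) - Z.of_nat (fl (S y)))%Z).
  { intros j Hj. specialize (Hfl j Hj). lia. }
  destruct rr_facts as [[r1 r2] _].
  destruct al_facts as [[a1 a2] [_ a3]].
  assert (rpos : 0 < rr ^ n') by (apply pow_lt; lra).
  set (q := INR d * phi) in *.
  pose proof (Rle_trans _ _ _ Hp (Rmin_l _ _)) as H1.
  pose proof (Rle_trans _ _ _ Hp (Rmin_r _ _)) as H2.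
  unfold frac in H1, H2.
  set (N := (2 * Z.of_nat d - (Z.of_nat (fl (S y)) - Z.of_nat (fl (S x))) - Int_part q)%Z).
  assert (Hd : th y - th x = IZR N - (q - IZR (Int_part q))).
  { unfold N, th, q. rewrite !minus_IZR, mult_IZR, <- !INR_IZR_INZ.
    unfold y. rewrite !S_INR, plus_INR. rewrite a3. simpl. ring. }
  destruct (th_bounds x) as [tx1 tx2]. destruct (th_bounds y) as [ty1 ty2].
  assert (Na : IZR (-1) < IZR N) by (simpl; lra).
  assert (Nb : IZR N < IZR 2) by (simpl; lra).
  apply lt_IZR in Na. apply lt_IZR in Nb.
  assert (Fj : forall j, (j < F (S (S n')))%nat -> (j <= m)%nat).
  { intros j Hj. rewrite F_SS in Hj. pose proof (F_le_S n'). unfold m. lia. }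
  destruct (Z.eq_dec N 1) as [E|E].
  - rewrite E in Hd. set (dl := th y - th x) in *.
    destruct (cover n' (th x) (1 - dl)) as [j [Hj [k Hk]]].
    specialize (Fj j Hj).
    destruct (win x j) as [w1 w2]. destruct (win y j) as [v1 v2].
    rewrite <- (Hc j Fj) in v1, v2.
    apply (contra _ k (th x + INR j * al) dl w1); unfold dl in *; lra.
  - assert (E0 : N = 0%Z) by lia. rewrite E0 in Hd. set (dl := th x - th y) in *.
    destruct (cover n' (th y) (1 - dl)) as [j [Hj [k Hk]]].
    specialize (Fj j Hj).
    destruct (win x j) as [w1 w2]. destruct (win y j) as [v1 v2].
    rewrite <- (Hc j Fj) in v1, v2.
    apply (contra _ k (th y + INR j * al) dl v1); unfold dl in *; lra.
Qed.
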